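(* Let $\mathbb P$ be a Bernoulli measure on $\partial\mathcal M$, let $a\in\Sigma$, and let $\mathcal M'_a=\{x\in\mathcal M:|x|_a=0\}$ be the submonoid of heaps with no occurrence of $a$. Then $$\sum_{x\in\mathcal M'_a}\mathbb P({\uparrow}x)<\infty,\qquad \sum_{x\in\mathcal M'_a}|x|\,\mathbb P({\uparrow}x)<\infty,\qquad \sum_{x\in\mathcal M'_a}|x|^2\,\mathbb P({\uparrow}x)<\infty.$$
   Context: Let $\Sigma$ be a finite set with at least two elements and $I\subseteq\Sigma\times\Sigma$ a symmetric irreflexive relation such that $(\Sigma,(\Sigma\times\Sigma)\setminus I)$ is connected. The heap monoid $\mathcal M=\mathcal M(\Sigma,I)$ is $\Sigma^*$ modulo the smallest congruence containing $(ab,ba)$ for $(a,b)\in I$; $\cdot$ is concatenation, $0$ the empty heap, $|x|$ the length and $|x|_a$ the number of occurrences of $a$ in any representative word. $x\le y$ iff $y=x\cdot z$ for some $z$. Cliques are heaps formed by distinct pairwise independent pieces; $\mathfrak C$ the nonempty ones; $\gamma\to\gamma'$ iff each piece of $\gamma'$ is dependent on some piece of $\gamma$. Every nonempty heap has a unique Cartier–Foata decomposition $\gamma_1\cdots\gamma_n$ with $\gamma_i\in\mathfrak C$, $\gamma_i\to\gamma_{i+1}$. The boundary $\partial\mathcal M$ is the set of infinite sequences $(\gamma_n)_{n\ge1}$ of nonempty cliques with $\gamma_n\to\gamma_{n+1}$, ordered together with $\mathcal M$ by $\xi\le\xi'$ iff $\gamma_1\cdots\gamma_n\le\gamma'_1\cdots\gamma'_n$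 for all $n$ (finite heaps padded with empty cliques). ${\uparrow}x=\{\xi\in\partial\mathcal M:x\le\xi\}$; $\mathcal F$ the generated $\sigma$-algebra. A Bernoulli measure is a probability $\mathbb P$ on $(\partial\mathcal M,\mathcal F)$ with $\mathbb P({\uparrow}(x\cdot y))=\mathbb P({\uparrow}x)\mathbb P({\uparrow}y)$ and $\mathbb P({\uparrow}x)>0$ for all $x,y$. *)

(* Defs.v *)
From Stdlib Require Import Reals.
From mathcomp Require Import all_boot.

(** * Heap monoid M(T, I): words over T modulo the congruence generated by
      ab = ba for (a,b) in I.  A heap is represented by any of its words. *)
Inductive heq {T : Type} (I : rel T) : seq T -> seq T -> Prop :=
| heq_refl u : heq I u u
| heq_sym u v : heq I u v -> heq I v u
| heq_trans u v w : heq I u v -> heq I v w -> heq I u w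
| heq_swap u v (a b : T) : I a b -> heq I (u ++ a :: b :: v) (u ++ b :: a :: v).

Definition hle {T : Type} (I : rel T) (x y : seq T) : Prop :=
  exists z, heq I y (x ++ z).

Definition is_clique {T : finType} (I : rel T) (g : {set T}) : Prop :=
  forall a b, a \in g -> b \in g -> a != b -> I a b.

Definition arrow {T : finType} (I : rel T) (g g' : {set T}) : Prop :=
  forall b, b \in g' -> exists2 a, a \in g & ~~ I a b.

Definition cliques_word {T : finType} (cs : seq {set T}) : seq T :=
  flatten (map (fun g : {set T} => enum g) cs).

Definition is_CF {T : finType} (I : rel T) (x : seq T) (cs : seq {set T}) : Prop :=
  (forall g, g \in cs -> is_clique I g /\ g != set0) /\
  (forall i, i.+1 < size cs -> arrow I (nth set0 cs i) (nth set0 cs i.+1)) /\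
  heq I x (cliques_word cs).

(** boundary elements: infinite sequences of nonempty cliques (indexed from 0)
    with xi n -> xi (n+1) *)
Definition is_boundary {T : finType} (I : rel T) (xi : nat -> {set T}) : Prop :=
  forall n, is_clique I (xi n) /\ xi n != set0 /\ arrow I (xi n) (xi n.+1).

Definition Bnd {T : finType} (I : rel T) := {xi : nat -> {set T} | is_boundary I xi}.

(** x <= xi : gamma_1(x)...gamma_n(x) <= xi_1 ... xi_n for all n,
    x padded with empty cliques *)
Definition le_bd {T : finType} (I : rel T) (x : seq T) (xi : nat -> {set T}) : Prop :=
  forall cs, is_CF I x cs -> forall n,
    hle I (cliques_word (map (fun i => nth set0 cs i) (iota 0 n)))
          (cliques_word (map xi (iota 0 n))).

Definition upset {T : finType} (I : rel T) (x : seq T) : Bnd I -> Prop :=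
  fun xi => le_bd I x (proj1_sig xi).

Inductive measurable {T : finType} (I : rel T) : (Bnd I -> Prop) -> Prop :=
| meas_up x : measurable I (upset I x)
| meas_compl A : measurable I A -> measurable I (fun xi => ~ A xi)
| meas_union (A : nat -> Bnd I -> Prop) :
    (forall n, measurable I (A n)) -> measurable I (fun xi => exists n, A n xi)
| meas_ext A B : measurable I A -> (forall xi, A xi <-> B xi) -> measurable I B.

(** probability measure on (Bnd, F) (values outside F are irrelevant) *)
Definition probability {T : finType} (I : rel T) (P : (Bnd I -> Prop) -> R) : Prop :=
  (forall A B, (forall xi, A xi <-> B xi) -> P A = P B) /\
  (forall A, measurable I A -> Rle R0 (P A)) /\
  P (fun _ => True) = R1 /\
  (forall A : nat -> Bnd I -> Prop,
     (forall n, measurable I (A n)) ->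
     (forall m n xi, m <> n -> A m xi -> A n xi -> False) ->
     infinite_sum (fun n => P (A n)) (P (fun xi => exists n, A n xi))).

Definition bernoulli {T : finType} (I : rel T) (P : (Bnd I -> Prop) -> R) : Prop :=
  probability I P /\
  (forall x y : seq T, P (upset I (x ++ y)) = Rmult (P (upset I x)) (P (upset I y))) /\
  (forall x : seq T, Rlt R0 (P (upset I x))).

(** sum over the heaps x satisfying S of a nonnegative f is finite:
    the sums over all finite families of pairwise distinct heaps are bounded *)
Definition heap_sum_finite {T : Type} (I : rel T) (S : seq T -> Prop)
    (f : seq T -> R) : Prop :=
  exists B : R, forall L : seq (seq T),
    (forall i j, i < j < size L -> ~ heq I (nth [::] L i) (nth [::] L j)) ->
    (forall w, List.In w L -> S w) ->
    Rle (foldr Rplus R0 (map f L)) B.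

(* Main.v *)
Require Import Defs.
From Stdlib Require Import Reals Lra Classical.
From mathcomp Require Import all_boot zify.
Set Implicit Arguments. Unset Strict Implicit.

Section Heq.
Variable T : finType.
Variable I : rel T.
Hypothesis HIsym : symmetric I.
Hypothesis HIirr : irreflexive I.

Notation heq := (heq I).

Lemma htrans u v w : heq u v -> heq v w -> heq u w.
Proof. exact: heq_trans. Qed.

Lemma hsym u v : heq u v -> heq v u.
Proof. exact: heq_sym. Qed.

Lemma heq_perm u v : heq u v -> perm_eq u v.
Proof.
elim=> {u v} [u|u v _ H|u v w _ H1 _ H2|u v b c _].
- exact: perm_refl.
- by rewrite perm_sym.
- exact: perm_trans H1 H2.
- by rewrite perm_cat2l; apply/permP => p /=; rewrite addnCA.
Qed.

Lemma heq_size u v : heq u v -> size u = size v.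
Proof. by move/heq_perm/perm_size. Qed.

Lemma heq_mem u v x : heq u v -> (x \in u) = (x \in v).
Proof. by move/heq_perm/perm_mem. Qed.

Lemma heq_map (f : seq T -> seq T) u v : heq u v ->
  (forall u v b c, I b c -> heq (f (u ++ b :: c :: v)) (f (u ++ c :: b :: v))) ->
  heq (f u) (f v).
Proof.
move=> H Hf; elim: H=> {u v} [u|u v _ H|u v w _ H1 _ H2|u v b c Hbc].
- exact: heq_refl.
- exact: heq_sym.
- exact: heq_trans H1 H2.
- exact: Hf.
Qed.

Lemma heq_catl s u v : heq u v -> heq (s ++ u) (s ++ v).
Proof.
move=> H; apply: (heq_map (f := fun w => s ++ w) H) => u' v' b c Hbc.
by rewrite !catA; apply: heq_swap.
Qed.

Lemma heq_catr s u v : heq u v -> heq (u ++ s) (v ++ s).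
Proof.
move=> H; apply: (heq_map (f := fun w => w ++ s) H) => u' v' b c Hbc.
by rewrite -!catA /=; apply: heq_swap.
Qed.

Lemma heq_cat u u' v v' : heq u u' -> heq v v' -> heq (u ++ v) (u' ++ v').
Proof.
move=> H1 H2; apply: heq_trans (heq_catr _ H1) _; exact: heq_catl.
Qed.

Lemma heq_rev u v : heq u v -> heq (rev u) (rev v).
Proof.
move=> H; apply: (heq_map (f := fun w => rev w) H) => u' v' b c Hbc.
rewrite !rev_cat !rev_cons -!cats1 -!catA /=.
by apply: heq_swap; rewrite HIsym.
Qed.

Lemma rem_cat (x : T) (u v : seq T) : rem x (u ++ v) = if x \in u then rem x u ++ v else u ++ rem x v.
Proof.
elim: u => [//|y u IH] /=; rewrite inE IH.
case: (eqVneq y x) => [->|nyx] //=.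
by case: (x \in u).
Qed.

Lemma heq_rem x u v : heq u v -> heq (rem x u) (rem x v).
Proof.
move=> H0; apply: (heq_map (f := rem x) H0) => u' v' b c Hbc.
have bc : b != c by apply/eqP=> E; move: Hbc; rewrite E HIirr.
case xu : (x \in u').
  rewrite !rem_cat xu; apply: heq_swap Hbc.
rewrite !rem_cat xu /=.
case: (eqVneq b x) => [Eb|nbx].
  by subst b; rewrite eq_sym (negbTE bc); exact: heq_refl.
case: (eqVneq c x) => [Ec|ncx].
  by subst c; exact: heq_refl.
exact: heq_swap.
Qed.

Lemma heq_cancell s u v : heq (s ++ u) (s ++ v) -> heq u v.
Proof.
elim: s => [//|x s IH] /= H; apply: IH.
by have := heq_rem x H; rewrite /= eqxx.
Qed.

Lemma heq_cancelr s u v : heq (u ++ s) (v ++ s) -> heq u v.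
Proof.
move=> H; have := heq_rev H; rewrite !rev_cat => /heq_cancell/heq_rev.
by rewrite !revK.
Qed.

Lemma heq_commute c B u v : (forall b, b \in B -> I b c) ->
  heq (u ++ B ++ c :: v) (u ++ c :: B ++ v).
Proof.
elim: B u => [|b B IH] u HB /=; first exact: heq_refl.
have := IH (u ++ [:: b]) (fun y yB => HB y (@mem_behead _ (b :: B) y yB)).
rewrite -!catA /= => H1; apply: heq_trans H1 _.
apply: heq_swap; apply: HB; exact: mem_head.
Qed.

Lemma heq_perm_clique s t : uniq s -> perm_eq s t ->
  (forall x y, x \in s -> y \in s -> x != y -> I x y) -> heq s t.
Proof.
elim: s t => [|x s IH] t Us Pst Hcl.
  by move/perm_size: Pst => /esym/size0nil ->; exact: heq_refl.
have xt : x \in t by rewrite -(perm_mem Pst) mem_head.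
case/splitPr: xt Pst => t1 t2 Pst.
move: Us => /= /andP [xs Us].
have P2 : perm_eq s (t1 ++ t2).
  by rewrite -(perm_cons x); apply: perm_trans Pst _; by rewrite -[x :: t2]cat1s perm_catCA.
have mt1 : forall y, y \in t1 -> y \in s.
  move=> y yt; by rewrite (perm_mem P2) mem_cat yt.
apply: heq_trans (_ : heq (x :: t1 ++ t2) _).
  apply: (@heq_catl [:: x]); apply: IH => // y z ys zs; apply: Hcl; by rewrite inE ?ys ?zs orbT.
apply: heq_sym; apply: (@heq_commute x t1 [::] t2) => y yt.
apply: Hcl; [by rewrite inE mt1 ?orbT | exact: mem_head |].
by apply/eqP=> E; move: xs; rewrite -E mt1.
Qed.

End Heq.

Section DQ.
Variable T : finType.
Variable I : rel T.
Hypothesis HIsym : symmetric I.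
Hypothesis HIirr : irreflexive I.
Variable a : T.

Notation heq := (heq I).

Definition dep (b : T) (S : {set T}) : bool := [exists s in S, ~~ I b s].

Definition stp (b : T) (t : seq T * seq T * {set T}) :=
  let: (m, q, St) := t in
  if dep b St then (b :: m, q, b |: St) else (m, b :: q, St).

Definition proc (x : seq T) t := foldr stp t x.

Lemma proc_cat x y t : proc (x ++ y) t = proc x (proc y t).
Proof. exact: foldr_cat. Qed.

Lemma proc_acc x m q St : proc x (m, q, St) =
  ((proc x ([::],[::],St)).1.1 ++ m, (proc x ([::],[::],St)).1.2 ++ q, (proc x ([::],[::],St)).2).
Proof.
elim: x => [//|b x IH] /=.
rewrite IH; case: (proc x _) => [[m' q'] S'] /=.
by case: (dep b S').
Qed.

Definition st0 : seq T * seq T * {set T} := ([::], [::], [set a]).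

Definition Dw (w : seq T) : seq T :=
  if a \in w then (proc (take (index a w) w) st0).1.1 ++ [:: a] else [::].
Definition Qw (w : seq T) : seq T :=
  if a \in w then (proc (take (index a w) w) st0).1.2 ++ drop (index a w).+1 w else w.

Lemma Dw_split pre post : a \notin pre ->
  Dw (pre ++ a :: post) = (proc pre st0).1.1 ++ [:: a].
Proof.
move=> apre; rewrite /Dw mem_cat mem_head orbT index_cat (negbTE apre) /= eqxx addn0.
by rewrite take_size_cat.
Qed.

Lemma Qw_split pre post : a \notin pre ->
  Qw (pre ++ a :: post) = (proc pre st0).1.2 ++ post.
Proof.
move=> apre; rewrite /Qw mem_cat mem_head orbT index_cat (negbTE apre) /= eqxx addn0.
rewrite take_size_cat //; congr (_ ++ _).
by rewrite -cat_rcons drop_size_cat // size_rcons.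
Qed.

Lemma split_first w : a \in w -> exists pre post, w = pre ++ a :: post /\ a \notin pre.
Proof.
move=> aw; exists (take (index a w) w), (drop (index a w).+1 w); split.
  by rewrite -{1}(cat_take_drop (index a w) w) (drop_nth a) ?index_mem // nth_index.
by rewrite in_take // ltnn.
Qed.


Lemma dep_U1 b c St : dep b (c |: St) = ~~ I b c || dep b St.
Proof.
apply/existsP/orP => [[s /andP [] ]|[H|/existsP [s /andP [sS H]]]].
- move/setU1P => [-> ->|sS H]; first by left.
  by right; apply/existsP; exists s; rewrite sS.
- by exists c; rewrite setU11.
- by exists s; rewrite inE sS orbT.
Qed.

Lemma stp_swap b c t : I b c ->
  [/\ heq (stp b (stp c t)).1.1 (stp c (stp b t)).1.1,
      heq (stp b (stp c t)).1.2 (stp c (stp b t)).1.2 &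
      (stp b (stp c t)).2 = (stp c (stp b t)).2].
Proof.
move=> Ibc; case: t => [[m q] St].
have Hb : dep b (c |: St) = dep b St by rewrite dep_U1 Ibc.
have Hc : dep c (b |: St) = dep c St by rewrite dep_U1 HIsym Ibc.
rewrite /=; case db: (dep b St); case dc: (dep c St);
  rewrite /= ?Hb ?Hc ?db ?dc /=; split;
  try exact: heq_refl; try exact: setUCA.
all: try exact: (@heq_swap _ I [::]).
all: done.
Qed.

Lemma proc_heq u t1 t2 : t1.2 = t2.2 -> heq t1.1.1 t2.1.1 -> heq t1.1.2 t2.1.2 ->
  [/\ heq (proc u t1).1.1 (proc u t2).1.1, heq (proc u t1).1.2 (proc u t2).1.2 &
      (proc u t1).2 = (proc u t2).2].
Proof.
case: t1 => [[m1 q1] S1]; case: t2 => [[m2 q2] S2] /= <- Hm Hq.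
rewrite (proc_acc u m1) (proc_acc u m2) /=; split => //; exact: heq_catl.
Qed.

Lemma dep_a c : I c a -> dep c [set a] = false.
Proof. by move=> H; rewrite /dep; apply/existsP => [[s /andP [/set1P -> ]]]; rewrite H. Qed.

Lemma DQ_swap u v b c : I b c ->
  heq (Dw (u ++ b :: c :: v)) (Dw (u ++ c :: b :: v)) /\
  heq (Qw (u ++ b :: c :: v)) (Qw (u ++ c :: b :: v)).
Proof.
move=> Ibc.
have bc : b != c by apply/eqP=> E; move: Ibc; rewrite E HIirr.
case au : (a \in u).
  have [pre [post [-> apre]]] := split_first au.
  rewrite -!catA /= !Dw_split // !Qw_split //; split; first exact: heq_refl.
  by rewrite !catA; apply: heq_swap.
case: (eqVneq b a) => [Eb|nba].
  subst b.
  have ca : c != a by rewrite eq_sym.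
  have e2 : u ++ c :: a :: v = (u ++ [:: c]) ++ a :: v by rewrite -catA.
  have apre : a \notin u ++ [:: c] by rewrite mem_cat au inE eq_sym (negbTE ca).
  rewrite e2 !Dw_split ?au // !Qw_split ?au // proc_cat.
  have -> : proc [:: c] st0 = ([::],[:: c],[set a]).
    by rewrite /proc /st0 [foldr _ _ _]/= dep_a // HIsym.
  rewrite (proc_acc u [::]); cbn [fst snd]; rewrite cats0 -catA; split; exact: heq_refl.
case: (eqVneq c a) => [Ec|nca].
  subst c.
  have e1 : u ++ b :: a :: v = (u ++ [:: b]) ++ a :: v by rewrite -catA.
  have apre : a \notin u ++ [:: b] by rewrite mem_cat au inE eq_sym (negbTE nba).
  rewrite e1 !Dw_split ?au // !Qw_split ?au // proc_cat.
  have -> : proc [:: b] st0 = ([::],[:: b],[set a]).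
    by rewrite /proc /st0 [foldr _ _ _]/= dep_a.
  rewrite (proc_acc u [::]); cbn [fst snd]; rewrite cats0 -catA; split; exact: heq_refl.
case av : (a \in v); last first.
  have aw : forall x y, x != a -> y != a -> (a \in u ++ x :: y :: v) = false.
    move=> x y xa ya; rewrite mem_cat au !inE av orbF !(eq_sym a).
    by rewrite (negbTE xa) (negbTE ya).
  rewrite /Dw /Qw !aw //; split; [exact: heq_refl | exact: heq_swap].
have [pre [post [-> apre]]] := split_first av.
have e1 : forall x y, u ++ x :: y :: pre ++ a :: post = (u ++ x :: y :: pre) ++ a :: post.
  by move=> x y; rewrite -catA.
have apre' : forall x y, x != a -> y != a -> a \notin u ++ x :: y :: pre.
  move=> x y xa ya; rewrite mem_cat au !inE (negbTE apre) !orbF !(eq_sym a).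
  by rewrite (negbTE xa) (negbTE ya).
rewrite !e1 !Dw_split ?apre' // !Qw_split ?apre' // !proc_cat.
change (proc (b :: c :: pre) st0) with (stp b (stp c (proc pre st0))).
change (proc (c :: b :: pre) st0) with (stp c (stp b (proc pre st0))).
have [H1 H2 H3] := stp_swap (proc pre st0) Ibc.
have [K1 K2 K3] := proc_heq u H3 H1 H2.
split; [exact: heq_catr | exact: heq_catr].
Qed.

Lemma Dw_heq u v : heq u v -> heq (Dw u) (Dw v).
Proof.
move=> H; apply: (heq_map (f := Dw) H) => u' v' b c Hbc; by case: (DQ_swap u' v' Hbc).
Qed.

Lemma Qw_heq u v : heq u v -> heq (Qw u) (Qw v).
Proof.
move=> H; apply: (heq_map (f := Qw) H) => u' v' b c Hbc; by case: (DQ_swap u' v' Hbc).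
Qed.

Lemma proc_setT x m q : proc x (m, q, setT) = (x ++ m, q, setT).
Proof.
elim: x => [//|b x IH]; rewrite /proc /= -/(proc x _) IH /=.
have -> : dep b setT by apply/existsP; exists b; rewrite inE HIirr.
by rewrite setUT.
Qed.

End DQ.

Section W.
Variable T : finType.
Variable I : rel T.
Hypothesis HIsym : symmetric I.
Hypothesis HIirr : irreflexive I.
Variable a : T.

Notation heq := (heq I).
Notation proc := (proc I).
Notation dep := (dep I).
Notation Dw := (Dw I a).
Notation Qw := (Qw I a).
Notation st0 := (st0 a).

Definition spr (x : seq T) (St : {set T}) := (proc x ([::],[::],St)).2.

Lemma spr_cons y x (St : {set T}) : spr (y :: x) St =
  if dep y (spr x St) then y |: spr x St else spr x St.
Proof.
rewrite /spr; change (proc (y :: x) ?t) with (stp I y (proc x t)).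
by case: (proc x _) => [[m q] S'] /=; case: (dep y S').
Qed.

Lemma spr_cat x y (St : {set T}) : spr (x ++ y) St = spr x (spr y St).
Proof.
rewrite /spr proc_cat; case E: (proc y _) => [[m q] S'].
by rewrite proc_acc.
Qed.

Lemma spr_sub x (St : {set T}) : St \subset spr x St.
Proof.
elim: x => [|y x IH]; first by rewrite /spr.
rewrite spr_cons; case: (dep y _) => //.
apply: subset_trans IH _; exact: subsetU1.
Qed.

Lemma dep_sub b (S1 S2 : {set T}) : S1 \subset S2 -> dep b S1 -> dep b S2.
Proof.
move=> sub /existsP [s /andP [sS H]]; apply/existsP; exists s.
by rewrite H (subsetP sub).
Qed.

Lemma spr_mem b x (St : {set T}) : b \in x -> dep b St -> b \in spr x St.
Proof.
elim: x => [//|y x IH]; rewrite inE => /orP [/eqP <- | bx] Hd; rewrite spr_cons.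
  by rewrite (dep_sub (spr_sub x St) Hd) setU11.
by case: (dep y _); rewrite ?inE IH ?orbT.
Qed.

Lemma lemmaC_D W0 x r : a \notin x -> a \notin W0 -> spr W0 [set a] = setT ->
  Dw (x ++ W0 ++ a :: r) = x ++ (proc W0 st0).1.1 ++ [:: a].
Proof.
move=> ax aW HW; rewrite catA Dw_split; last by rewrite mem_cat negb_or ax.
rewrite proc_cat; move: HW; rewrite /spr /st0.
case: (proc W0 _) => [[m q] S'] /= ->.
by rewrite proc_setT // -catA.
Qed.

Lemma lemmaC_Q W0 x r : a \notin x -> a \notin W0 -> spr W0 [set a] = setT ->
  Qw (x ++ W0 ++ a :: r) = (proc W0 st0).1.2 ++ r.
Proof.
move=> ax aW HW; rewrite catA Qw_split; last by rewrite mem_cat negb_or ax.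
rewrite proc_cat; move: HW; rewrite /spr /st0.
case: (proc W0 _) => [[m q] S'] /= ->.
by rewrite proc_setT.
Qed.

Lemma lemmaC W0 x y r r' : a \notin x -> a \notin y -> a \notin W0 ->
  spr W0 [set a] = setT ->
  heq (x ++ W0 ++ a :: r) (y ++ W0 ++ a :: r') -> heq x y /\ heq r r'.
Proof.
move=> ax ay aW HW H; split.
  have := Dw_heq HIsym HIirr a H; rewrite !lemmaC_D //; exact: heq_cancelr.
have := Qw_heq HIsym HIirr a H; rewrite !lemmaC_Q //; exact: heq_cancell.
Qed.

Hypothesis Hconn : forall x y : T, connect [rel u v | ~~ I u v] x y.

Lemma grow (St : {set T}) : a \in St -> St != setT -> exists b, b \notin St /\ dep b St.
Proof.
move=> aS nT.
have [y yS] : exists y, y \notin St.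
  case: (pickP (fun y => y \notin St)) => [y Hy|H]; first by exists y.
  by case/eqP: nT; apply/setP => y; rewrite inE; move: (H y) => /= /negbFE.
case: (boolP [exists b, (b \notin St) && dep b St]) => [/existsP [b /andP [H1 H2]]|H].
  by exists b.
exfalso; move: yS; apply/negP/negPn.
have := Hconn a y; case/connectP => p.
elim: p a aS => [|z p IH] x xS /=; first by move=> _ ->.
case/andP => xz pp ly; apply: (IH z) => //.
apply/negPn/negP => zS; move/negP: H; apply; apply/existsP; exists z.
rewrite zS /=; apply/existsP; exists x; by rewrite xS /= HIsym.
Qed.

Definition Ea := [seq t <- enum T | t != a].
Definition blocks k := flatten (nseq k Ea).

Lemma blocks_a k : a \notin blocks k.
Proof.
elim: k => [//|k IH]; rewrite /blocks /= mem_cat negb_or -/(blocks k) IH andbT.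
by rewrite mem_filter eqxx.
Qed.

Lemma blocks_grow k : spr (blocks k) [set a] = setT \/ k < #|spr (blocks k) [set a]|.
Proof.
elim: k => [|k [IH|IH]]; first by right; rewrite /blocks /spr /= cards1.
  left; rewrite /blocks /= spr_cat -/(blocks k) IH.
  by apply/eqP; rewrite eqEsubset subsetT spr_sub.
rewrite /blocks /= spr_cat -/(blocks k).
set S0 := spr (blocks k) [set a] in IH *.
have aS : a \in S0 by apply: (subsetP (spr_sub _ _)); rewrite set11.
case: (eqVneq S0 setT) => [E|nE].
  left; apply/eqP; rewrite eqEsubset subsetT /= -E; exact: spr_sub.
right; have [b [bS db]] := grow aS nE.
have bE : b \in Ea by rewrite mem_filter mem_enum andbT; apply/eqP=> E; move: bS; rewrite E aS.
have Hp : S0 \proper spr Ea S0.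
  by rewrite properE spr_sub /=; apply/subsetPn; exists b => //; exact: spr_mem.
exact: leq_ltn_trans IH (proper_card Hp).
Qed.

Lemma W0_exists : exists W0, a \notin W0 /\ spr W0 [set a] = setT.
Proof.
exists (blocks #|T|); split; first exact: blocks_a.
case: (blocks_grow #|T|) => // H.
by have := max_card (mem (spr (blocks #|T|) [set a])); rewrite leqNgt H.
Qed.

End W.

Section CF.
Variable T : finType.
Variable I : rel T.
Hypothesis HIsym : symmetric I.
Hypothesis HIirr : irreflexive I.

Notation heq := (heq I).

Definition indep (c : T) (g : {set T}) := [forall b in g, I c b].
Definition arrowb (g g' : {set T}) := [forall b in g', [exists x in g, ~~ I x b]].
Definition clq (g : {set T}) := [forall x in g, forall y in g, (x != y) ==> I x y].
Definition cfb (cs : seq {set T}) :=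
  all (fun g => clq g && (g != set0)) cs && sorted arrowb cs.

Lemma arrowP g g' : reflect (arrow I g g') (arrowb g g').
Proof.
apply: (iffP forall_inP) => H b bg.
  by have /exists_inP [x xg Hx] := H b bg; exists x.
by have [x xg Hx] := H b bg; apply/exists_inP; exists x.
Qed.

Lemma clqP g : reflect (is_clique I g) (clq g).
Proof.
apply: (iffP forall_inP) => H.
  by move=> x y xg yg nxy; have /forall_inP/(_ y yg)/implyP := H x xg; apply.
by move=> x xg; apply/forall_inP => y yg; apply/implyP; apply: H.
Qed.

Lemma cw_cat (A B : seq {set T}) : cliques_word (A ++ B) = cliques_word A ++ cliques_word B.
Proof. by rewrite /cliques_word map_cat flatten_cat. Qed.

Lemma cw_cons g (B : seq {set T}) : cliques_word (g :: B) = enum g ++ cliques_word B.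
Proof. by []. Qed.

Lemma cfb_CF x (cs : seq {set T}) : cfb cs -> heq x (cliques_word cs) -> is_CF I x cs.
Proof.
case/andP => /allP Hall /(sortedP set0) Hs Hx; split; last split => //.
  by move=> g /Hall /andP [/clqP H1 H2].
by move=> i /Hs /arrowP.
Qed.

Lemma split_indep c (cs : seq {set T}) : exists A B, cs = A ++ B /\ all (indep c) B /\
  (A = [::] \/ ~~ indep c (last set0 A)).
Proof.
elim/last_ind: cs => [|cs g [A [B [E [HB HA]]]]]; first by exists [::], [::]; do 2?split => //; left.
case: (boolP (indep c g)) => Hg.
  exists A, (rcons B g); split; first by rewrite E rcons_cat.
  by rewrite all_rcons Hg HB.
exists (rcons cs g), [::]; split; first by rewrite cats0.
by split => //; right; rewrite last_rcons.
Qed.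

Lemma sorted_cat_cons (e : rel {set T}) A x B :
  sorted e (A ++ x :: B) = sorted e (rcons A x) && path e x B.
Proof.
case: A => [|y A] //=.
by rewrite -cat_rcons cat_path last_rcons.
Qed.


Lemma sorted_rcons' (e : rel {set T}) A x :
  sorted e (rcons A x) = sorted e A && ((A == [::]) || e (last set0 A) x).
Proof. by case: A => [|y A] //=; rewrite rcons_path. Qed.

Lemma path_head_mono (g g2 : {set T}) B :
  (forall y, arrowb g y -> arrowb g2 y) -> path arrowb g B -> path arrowb g2 B.
Proof. by case: B => [|y B] //= H /andP [/H -> ->]. Qed.

Lemma arrowb_U1l c g y : arrowb g y -> arrowb (c |: g) y.
Proof.
move/forall_inP => H; apply/forall_inP => b bg; have /exists_inP [x xg Hx] := H b bg.
by apply/exists_inP; exists x; rewrite ?setU1r.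
Qed.

Lemma indep_mem c g b : indep c g -> b \in g -> I c b.
Proof. by move/forall_inP; apply. Qed.

Lemma CF_exists w : exists cs, cfb cs /\ heq w (cliques_word cs).
Proof.
elim/last_ind: w => [|w c [cs [Hc Hh]]].
  by exists [::]; split => //; exact: heq_refl.
have [A [B [E [HB HA]]]] := split_indep c cs; subst cs.
move: Hc => /andP [Hall Hsort]; move: Hall; rewrite all_cat => /andP [HallA HallB].
have Hh' : heq (rcons w c) (cliques_word (A ++ B) ++ [:: c]).
  by rewrite -cats1; exact: heq_catr.
clear Hh.
case: B HB HallB Hsort Hh' => [|g1 B'] HB HallB Hsort Hh'.
  exists (rcons A [set c]); split; last first.
    apply: heq_trans Hh' _; rewrite cats0 -cats1 cw_cat cw_cons enum_set1.
    exact: heq_refl.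
  rewrite /cfb -cats1 all_cat HallA /= cats1 sorted_rcons'.
  have -> : clq [set c] by apply/forall_inP => x /set1P -> ; apply/forall_inP => y /set1P ->; rewrite eqxx.
  rewrite /= -(cats0 A) Hsort /=.
  have -> : [set c] != set0 by apply/set0Pn; exists c; rewrite set11.
  case: HA => [->//|Hl]; rewrite orbC; apply/orP; left.
  apply/forall_inP => b /set1P ->.
  move: Hl; apply: contraR => Hn; apply/forall_inP => y yA.
  apply/negPn/negP => Hy; move: Hn => /negP; apply; apply/exists_inP; exists y; [by rewrite cats0 | by rewrite HIsym].
move: HB => /= /andP [Hg1 HB'].
move: HallB => /= /andP [/andP [cg1 ng1] HallB'].
have cng1 : c \notin g1.
  by apply/negP => cg; move: (indep_mem Hg1 cg); rewrite HIirr.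
exists (A ++ (c |: g1) :: B'); split.
  rewrite /cfb all_cat HallA /= HallB' andbT sorted_cat_cons.
  have -> : c |: g1 != set0 by apply/set0Pn; exists c; rewrite setU11.
  have -> : clq (c |: g1).
    apply/clqP => x y /setU1P [->|xg] /setU1P [->|yg] nxy.
    - by rewrite eqxx in nxy.
    - exact: indep_mem Hg1 yg.
    - by rewrite HIsym; exact: indep_mem Hg1 xg.
    - by move/clqP: cg1; apply.
  move: Hsort; rewrite sorted_cat_cons => /andP [Hs1 Hs2].
  rewrite /= (path_head_mono (@arrowb_U1l c g1) Hs2) andbT.
  move: Hs1; rewrite !sorted_rcons' => /andP [-> H] /=.
  case: HA => [->//|Hl]; move: H; case: (A == [::]) => //= /forall_inP H.
  apply/forall_inP => b /setU1P [->|bg]; last exact: H.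
  move: Hl; apply: contraR => Hn; apply/forall_inP => y yA.
  apply/negPn/negP => Hy; move: Hn => /negP; apply; apply/exists_inP; exists y; [exact: yA | by rewrite HIsym].
apply: heq_trans Hh' _.
rewrite !cw_cat !cw_cons -!catA.
have HBc : forall b, b \in cliques_word B' -> I b c.
  move=> b /flatten_mapP [g gB bg]; rewrite mem_enum in bg.
  by rewrite HIsym; apply: (indep_mem _ bg); move/allP: HB'; apply.
apply: heq_trans (_ : heq ((cliques_word A ++ enum g1) ++ c :: cliques_word B' ++ [::]) _).
  have := @heq_commute T I c (cliques_word B') (cliques_word A ++ enum g1) [::] HBc.
  by rewrite -!catA.
rewrite cats0 -!catA; apply: heq_catl.
rewrite -cat1s catA; apply: heq_catr.
apply: heq_perm_clique.
- by rewrite cat_uniq enum_uniq /= mem_enum orbF andbT.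
- apply: uniq_perm; first by rewrite cat_uniq enum_uniq /= mem_enum orbF andbT.
    exact: enum_uniq.
  by move=> y; rewrite mem_cat !mem_enum inE in_setU1 orbC.
move=> x y; rewrite !mem_cat !mem_enum !inE => /orP [xg|/eqP ->] /orP [yg|/eqP ->] nxy.
- by move/clqP: cg1; apply.
- by rewrite HIsym; exact: indep_mem Hg1 xg.
- exact: indep_mem Hg1 yg.
- by rewrite eqxx in nxy.
Qed.

End CF.

Definition compat {T : Type} (I : rel T) (u v : seq T) :=
  exists z1 z2, heq I (u ++ z1) (v ++ z2).

Lemma map_nth_iota_out {A : Type} (x0 : A) s k m : size s <= m ->
  map (nth x0 s) (iota m k) = nseq k x0.
Proof.
elim: k m => [//|k IH] m Hm /=.
by rewrite nth_default // IH // (leq_trans Hm).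
Qed.

Lemma map_nth_iota {A : Type} (x0 : A) s k :
  map (nth x0 s) (iota 0 (size s + k)) = s ++ nseq k x0.
Proof.
rewrite iotaD map_cat; congr (_ ++ _); first exact: (mkseq_nth x0 s).
exact: map_nth_iota_out.
Qed.

Section Meas.
Variable T : finType.
Variable I : rel T.
Hypothesis HIsym : symmetric I.
Hypothesis HIirr : irreflexive I.
Variable P : (Bnd I -> Prop) -> R.
Hypothesis HP : bernoulli I P.

Notation heq := (heq I).

Lemma cw_nseq0 k : cliques_word (nseq k (@set0 T)) = [::].
Proof. by elim: k => [//|k IH]; rewrite -[nseq _ _]/(set0 :: nseq k set0) cw_cons IH enum_set0. Qed.

Lemma up_compat u v (xi : Bnd I) : upset I u xi -> upset I v xi -> compat I u v.
Proof.
move=> Hu Hv.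
have [cu [Hcu Hhu]] := CF_exists HIsym HIirr u.
have [cv [Hcv Hhv]] := CF_exists HIsym HIirr v.
set n := size cu + size cv.
have key : forall w cs, cfb I cs -> heq w (cliques_word cs) -> size cs <= n ->
    upset I w xi -> exists z, heq (cliques_word (map (proj1_sig xi) (iota 0 n))) (w ++ z).
  move=> w cs Hc Hh Hs Hw.
  have E : map (fun i => nth set0 cs i) (iota 0 n) = cs ++ nseq (n - size cs) set0.
    by rewrite -{1}(subnKC Hs) map_nth_iota.
  have := Hw cs (cfb_CF Hc Hh) n; rewrite E cw_cat cw_nseq0 cats0.
  case=> z Hz; exists z; apply: heq_trans Hz _; apply: heq_catr; exact: heq_sym.
have [z1 H1] := key u cu Hcu Hhu (leq_addr _ _) Hu.
have [z2 H2] := key v cv Hcv Hhv (leq_addl _ _) Hv.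
exists z1, z2; exact: htrans (hsym H1) H2.
Qed.


Definition p (w : seq T) := P (upset I w).

Lemma P_ext (A B : Bnd I -> Prop) : (forall xi, A xi <-> B xi) -> P A = P B.
Proof. by case: HP => [[H _] _]; apply: H. Qed.

Lemma P_ge0 A : measurable I A -> Rle R0 (P A).
Proof. by case: HP => [[_ [H _]] _]; apply: H. Qed.

Lemma P_True : P (fun _ => True) = R1.
Proof. by case: HP => [[_ [_ [H _]]] _]. Qed.

Lemma P_add (A : nat -> Bnd I -> Prop) :
  (forall n, measurable I (A n)) ->
  (forall m n xi, m <> n -> A m xi -> A n xi -> False) ->
  infinite_sum (fun n => P (A n)) (P (fun xi => exists n, A n xi)).
Proof. by case: HP => [[_ [_ [_ H]]] _]; apply: H. Qed.

Lemma p_cat x y : p (x ++ y) = Rmult (p x) (p y).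
Proof. by case: HP => [_ [H _]]; apply: H. Qed.

Lemma p_pos x : Rlt R0 (p x).
Proof. by case: HP => [_ [_ H]]; apply: H. Qed.

Lemma meas_True : measurable I (fun _ => True).
Proof.
apply: (meas_ext I (fun xi => exists n : nat,
   (fun n xi => if n == 0 then upset I [::] xi else ~ upset I [::] xi) n xi)).
  apply: meas_union => n; case: n => [|n] /=.
    by apply: (meas_ext I _ _ (meas_up I [::])).
  by apply: (meas_ext I _ _ (meas_compl I _ (meas_up I [::]))).
move=> xi; split => // _.
by case: (classic (upset I [::] xi)) => H; [exists 0 | exists 1].
Qed.

Lemma meas_False : measurable I (fun _ => False).
Proof. by apply: (meas_ext I _ _ (meas_compl I _ meas_True)) => xi; split. Qed.

Lemma inf_sum_const c : infinite_sum (fun _ => c) c -> c = R0.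
Proof.
move=> H; case: (Req_dec c R0) => // Hc; exfalso.
have Hp : Rlt R0 (Rabs c) by apply: Rabs_pos_lt.
have [N HN] := H _ Hp.
have := HN N.+1 (Nat.le_succ_diag_r N).
rewrite /R_dist sum_cte.
replace (Rminus (Rmult c (INR N.+2)) c) with (Rmult c (INR N.+1)); last by rewrite (S_INR N.+1); ring.
rewrite Rabs_mult (Rabs_right (INR N.+1)); last by apply: Rle_ge; apply: pos_INR.
have : Rle R1 (INR N.+1) by rewrite S_INR; have := pos_INR N; lra.
move=> H1 H2; nra.
Qed.

Lemma P_False : P (fun _ => False) = R0.
Proof.
have := @P_add (fun _ _ => False) (fun _ => meas_False) (fun _ _ _ _ H _ => H).
rewrite (@P_ext (fun xi => exists n : nat, False) (fun _ => False)); last first.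
  by move=> xi; split => // [[]].
exact: inf_sum_const.
Qed.

Lemma inf_sum_eventually s l N S : infinite_sum s l ->
  (forall n, N <= n -> sum_f_R0 s n = S) -> l = S.
Proof.
move=> H HS; case: (Req_dec l S) => // Hl; exfalso.
have Hp : Rlt R0 (Rabs (Rminus S l)) by apply: Rabs_pos_lt; lra.
have [N' HN] := H _ Hp.
have := HN (N + N').
rewrite /R_dist HS ?leq_addr //.
move=> H1; have : Rlt (Rabs (Rminus S l)) (Rabs (Rminus S l)) by apply: H1; apply/leP; exact: leq_addl.
lra.
Qed.

Lemma foldr_rcons_R l x : foldr Rplus R0 (rcons l x) = Rplus (foldr Rplus R0 l) x.
Proof. by elim: l => [|y l IH] /=; [ring | rewrite IH; ring]. Qed.

Lemma sum_nth_take l n : sum_f_R0 (fun k => nth R0 l k) n = foldr Rplus R0 (take n.+1 l).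
Proof.
elim: n => [|n IH].
  by case: l => [|y l] //=; rewrite take0 /= Rplus_0_r.
rewrite /= IH.
case: (ltnP n.+1 (size l)) => Hn.
  by rewrite (take_nth R0 Hn) foldr_rcons_R.
by rewrite nth_default // !take_oversize ?(leq_trans Hn) //; ring.
Qed.

Lemma PU_le1 U : measurable I U -> Rle (P U) R1.
Proof.
move=> mU.
pose B n := if n == 0 then U else if n == 1 then (fun xi => ~ U xi) else (fun _ => False).
have mB : forall n, measurable I (B n).
  case=> [|[|n]] /=; [exact: mU | exact: meas_compl | exact: meas_False].
have dB : forall m n xi, m <> n -> B m xi -> B n xi -> False.
  by case=> [|[|m]] [|[|n]] xi //= Hmn; tauto.
have H := P_add mB dB.
rewrite (@P_ext _ (fun _ => True)) ?P_True in H; last first.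
  move=> xi; split => // _; by case: (classic (U xi)) => Hu; [exists 0 | exists 1].
have HS : forall k, sum_f_R0 (fun n => P (B n)) k.+1 = Rplus (P U) (P (fun xi => ~ U xi)).
  elim=> [//|k IH]; rewrite /= in IH *; rewrite IH P_False; ring.
have E := @inf_sum_eventually _ _ 1 (Rplus (P U) (P (fun xi => ~ U xi))) H.
have Hc := P_ge0 (meas_compl I _ mU).
have E' : R1 = Rplus (P U) (P (fun xi => ~ U xi)).
  by apply: E; case=> [//|k] _; exact: HS.
lra.
Qed.

Lemma disj_sum_le1 (F : seq (seq T)) :
  (forall i j, i < size F -> j < size F ->
     compat I (nth [::] F i) (nth [::] F j) -> i = j) ->
  Rle (foldr Rplus R0 (map p F)) R1.
Proof.
move=> HF.
pose A n := if n < size F then upset I (nth [::] F n) else (fun _ : Bnd I => False).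
have mA : forall n, measurable I (A n).
  by move=> n; rewrite /A; case: (n < size F); [exact: meas_up | exact: meas_False].
have dA : forall m n xi, m <> n -> A m xi -> A n xi -> False.
  move=> m n xi Hmn; rewrite /A.
  case Hm: (m < size F); case Hn: (n < size F) => // H1 H2.
  by apply: Hmn; apply: HF => //; exact: up_compat H1 H2.
have H := P_add mA dA.
have Hs : forall n, P (A n) = nth R0 (map p F) n.
  move=> n; rewrite /A; case Hn: (n < size F); first by rewrite (nth_map [::]).
  by rewrite P_False nth_default // size_map leqNgt Hn.
have E : P (fun xi => exists n, A n xi) = foldr Rplus R0 (map p F).
  apply: (inf_sum_eventually (N := size F)) H _ => n Hn.
  rewrite (PartSum.sum_eq _ (fun k => nth R0 (map p F) k)); last by move=> i _; exact: Hs.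
  by rewrite sum_nth_take take_oversize // size_map (leq_trans Hn).
rewrite -E; apply: PU_le1; exact: meas_union.
Qed.

End Meas.

Definition sumR {A : Type} (s : seq A) (f : A -> R) := foldr Rplus R0 (map f s).

Lemma sumR_cat {A : Type} (s1 s2 : seq A) f :
  sumR (s1 ++ s2) f = Rplus (sumR s1 f) (sumR s2 f).
Proof. by elim: s1 => [|x s1 IH] /=; rewrite /sumR /= ?Rplus_0_l // -/(sumR _ _) IH Rplus_assoc. Qed.

Lemma sumR_pairs {A B : Type} (s : seq A) (t : A -> seq B) f :
  sumR [seq (x, y) | x <- s, y <- t x] f = sumR s (fun x => sumR (t x) (fun y => f (x, y))).
Proof.
elim: s => [//|x s IH] /=.
rewrite sumR_cat -/(sumR _ _) IH [sumR (x :: _) _]/sumR /= -/(sumR _ _); congr Rplus.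
by rewrite /sumR -map_comp.
Qed.

Lemma sumR_le {A : eqType} (s : seq A) f g :
  (forall x, x \in s -> Rle (f x) (g x)) -> Rle (sumR s f) (sumR s g).
Proof.
elim: s => [|x s IH] H /=; first exact: Rle_refl.
apply: Rplus_le_compat; first by apply: H; exact: mem_head.
by apply: IH => y ys; apply: H; rewrite inE ys orbT.
Qed.

Lemma sumR_ext {A : eqType} (s : seq A) f g :
  (forall x, x \in s -> f x = g x) -> sumR s f = sumR s g.
Proof.
elim: s => [//|x s IH] H /=; rewrite /sumR /= -!/(sumR _ _).
by rewrite H ?mem_head // IH // => y ys; apply: H; rewrite inE ys orbT.
Qed.

Lemma sumR_const {A : Type} (s : seq A) c : sumR s (fun _ => c) = Rmult (INR (size s)) c.
Proof.
elim: s => [|x s IH]; first by rewrite /sumR /=; ring.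
have -> : sumR (x :: s) (fun _ => c) = Rplus c (sumR s (fun _ => c)) by [].
rewrite IH [size (x :: s)]/= S_INR; ring.
Qed.

Lemma sumR_mulr {A : Type} (s : seq A) f c :
  sumR s (fun x => Rmult (f x) c) = Rmult (sumR s f) c.
Proof.
elim: s => [|x s IH]; first by rewrite /sumR /=; ring.
have E : forall g, sumR (x :: s) g = Rplus (g x) (sumR s g) by [].
rewrite !E IH; ring.
Qed.

Lemma uniq_pairs {A B : eqType} (s : seq A) (t : A -> seq B) :
  uniq s -> (forall x, uniq (t x)) -> uniq [seq (x, y) | x <- s, y <- t x].
Proof.
elim: s => [//|x s IH] /= /andP [xs Us] Ut.
rewrite cat_uniq (map_inj_uniq (fun y y' (E : (x, y) = (x, y')) => f_equal snd E)) Ut IH //=.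
rewrite andbT; apply/hasP => [[z /allpairsPdep [x' [y [x's _ ->]]] /mapP [y' _ E]]].
by move: xs; case: E => <- _; rewrite x's.
Qed.

Lemma le_inv S c : Rlt R0 c -> Rle (Rmult S c) R1 -> Rle S (Rinv c).
Proof.
move=> Hc H; have Hi := Rinv_0_lt_compat c Hc.
replace S with (Rmult (Rmult S c) (Rinv c)); last by field; lra.
have : Rle (Rmult (Rmult S c) (Rinv c)) (Rmult R1 (Rinv c)).
  by apply: Rmult_le_compat_r; lra.
lra.
Qed.

Lemma In_mem {A : eqType} (w : A) L : w \in L -> List.In w L.
Proof. by elim: L => [//|x L IH]; rewrite inE => /orP [/eqP ->|/IH H]; [left | right]. Qed.

Lemma pairs_count n : n * n <= 2 * size [seq (k2, k1) | k2 <- iota 0 n.+1, k1 <- iota 0 k2.+1].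
Proof.
rewrite size_allpairs_dep.
elim: n => [//|n IH].
rewrite -[n.+2]addn1 iotaD map_cat sumn_cat.
have -> : sumn [seq size (iota 0 k.+1) | k <- iota (0 + n.+1) 1] = n.+2.
  by rewrite /= size_iota addn0.
move: IH; nia.
Qed.

Section Main.
Variable T : finType.
Variable I : rel T.
Hypothesis HIsym : symmetric I.
Hypothesis HIirr : irreflexive I.
Variable P : (Bnd I -> Prop) -> R.
Hypothesis HP : bernoulli I P.
Variable a : T.
Variable W0 : seq T.
Hypothesis aW0 : a \notin W0.
Hypothesis HW0 : spr I W0 [set a] = setT.

Notation heq := (heq I).
Notation pp := (p P).
Definition W := W0 ++ [:: a].

Lemma family_le1 (B : eqType) (G : seq B) (mk : B -> seq T) : uniq G ->
  (forall g1 g2, g1 \in G -> g2 \in G -> compat I (mk g1) (mk g2) -> g1 = g2) ->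
  Rle (sumR G (fun g => pp (mk g))) R1.
Proof.
case: G => [|g0 G'] UG HG; first by rewrite /sumR /=; lra.
rewrite /sumR map_comp; apply: (disj_sum_le1 HIsym HIirr HP) => i j.
rewrite size_map => Hi Hj; rewrite !(nth_map g0) // => Hc.
apply/eqP; rewrite -(nth_uniq g0 Hi Hj UG); apply/eqP.
by apply: HG => //; apply: mem_nth.
Qed.

Lemma notin_count (x : seq T) : count_mem a x = 0 -> a \notin x.
Proof. by move=> H; rewrite -has_pred1 has_count H. Qed.

Lemma compat_step x y r1 r2 : a \notin x -> a \notin y ->
  heq (x ++ W ++ r1) (y ++ W ++ r2) -> heq x y /\ heq r1 r2.
Proof.
move=> ax ay; rewrite /W -!catA /= => H.
exact: (lemmaC HIsym HIirr ax ay aW0 HW0 H).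
Qed.

Variable L : seq (seq T).
Hypothesis HL : forall i j, i < j < size L -> ~ heq (nth [::] L i) (nth [::] L j).
Hypothesis HLa : forall w, w \in L -> a \notin w.

Lemma Lnd x y : x \in L -> y \in L -> heq x y -> x = y.
Proof.
move=> xL yL H.
have Hx := nth_index [::] xL; have Hy := nth_index [::] yL.
have ix : index x L < size L by rewrite index_mem.
have iy : index y L < size L by rewrite index_mem.
case: (ltngtP (index x L) (index y L)) => Hxy.
- by exfalso; apply: (HL (i := index x L) (j := index y L)); rewrite ?Hxy ?iy ?Hx ?Hy.
- by exfalso; apply: (HL (i := index y L) (j := index x L)); rewrite ?Hxy ?ix ?Hx ?Hy //; exact: hsym.
- by rewrite -Hx -Hy Hxy.
Qed.

Lemma uniqL : uniq L.
Proof.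
apply/(uniqP [::]) => i j Hi Hj E.
case: (ltngtP i j) => // Hij; exfalso.
- by apply: (HL (i := i) (j := j)); rewrite ?Hij ?Hj //= E; exact: heq_refl.
- by apply: (HL (i := j) (j := i)); rewrite ?Hij ?Hi //= E; exact: heq_refl.
Qed.

Definition pW := pp W.
Lemma pWpos : Rlt R0 pW. Proof. exact: p_pos HP W. Qed.

Lemma claim1 : Rle (sumR L pp) (Rinv pW).
Proof.
apply: le_inv; first exact: pWpos.
rewrite -sumR_mulr.
rewrite (sumR_ext (g := fun x => pp (x ++ W))); last by move=> x _; rewrite (p_cat HP).
apply: (family_le1 uniqL) => x y xL yL [z1 [z2 H]].
apply: Lnd => //.
have H' : heq (x ++ W ++ z1) (y ++ W ++ z2) by rewrite catA [y ++ W ++ z2]catA.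
by case: (compat_step (HLa xL) (HLa yL) H').
Qed.

Lemma notin_take k x : a \notin x -> a \notin take k x.
Proof. by apply: contra; apply: mem_take. Qed.

Lemma notin_drop k x : a \notin x -> a \notin drop k x.
Proof. by apply: contra; apply: mem_drop. Qed.

Lemma assocW u v z : (u ++ W ++ v) ++ z = u ++ W ++ (v ++ z).
Proof. by rewrite -!catA. Qed.

Lemma assocW2 u v z : (u ++ W ++ v ++ W) ++ z = u ++ W ++ (v ++ W ++ z).
Proof. by rewrite -!catA. Qed.

Definition mk2 (g : seq T * nat) := take g.2 g.1 ++ W ++ drop g.2 g.1 ++ W.

Lemma claim2 : Rle (sumR L (fun x => Rmult (INR (size x).+1) (pp x))) (Rinv (Rmult pW pW)).
Proof.
apply: le_inv; first by apply: Rmult_lt_0_compat; exact: pWpos.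
pose G2 := [seq (x, k) | x <- L, k <- iota 0 (size x).+1].
have HG : Rle (sumR G2 (fun g => pp (mk2 g))) R1.
  apply: family_le1; first by apply: uniq_pairs uniqL _ => x; exact: iota_uniq.
  move=> [x k] [y k'] /allpairsPdep [x1 [k1 [xL kI E1]]].
  move=> /allpairsPdep [y1 [k2 [yL kI' E2]]] [z1 [z2 H]].
  case: E1 => Ex Ek; case: E2 => Ey Ek'; subst x k y k'.
  rewrite /mk2 /= !assocW2 in H.
  have [Ht Hr] := compat_step (notin_take _ (HLa xL)) (notin_take _ (HLa yL)) H.
  have [Hd _] := compat_step (notin_drop _ (HLa xL)) (notin_drop _ (HLa yL)) Hr.
  have Exy : x1 = y1.
    apply: Lnd => //; rewrite -(cat_take_drop k1 x1) -(cat_take_drop k2 y1).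
    exact: heq_cat Ht Hd.
  subst y1; congr (_, _).
  move: kI kI'; rewrite !mem_iota !add0n /= !ltnS => Hk1 Hk2.
  by have := heq_size Ht; rewrite !size_takel.
rewrite -sumR_mulr.
move: HG; rewrite /G2 sumR_pairs.
rewrite (sumR_ext (g := fun x => Rmult (Rmult (INR (size x).+1) (pp x)) (Rmult pW pW))) //.
move=> x xL; rewrite (sumR_ext (g := fun _ => Rmult (pp x) (Rmult pW pW))).
  by rewrite sumR_const size_iota; set nn := INR _; ring.
move=> k _; have Ex : pp x = Rmult (pp (take k x)) (pp (drop k x)) by rewrite -(p_cat HP) cat_take_drop.
rewrite Ex /pW /mk2 /W /= !(p_cat HP); ring.
Qed.

Definition prs n := [seq (k2, k1) | k2 <- iota 0 n.+1, k1 <- iota 0 k2.+1].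

Definition mk3 (g : seq T * (nat * nat)) :=
  take g.2.2 g.1 ++ W ++ drop g.2.2 (take g.2.1 g.1) ++ W ++ drop g.2.1 g.1 ++ W.

Lemma assocW3 u v w z :
  (u ++ W ++ v ++ W ++ w ++ W) ++ z = u ++ W ++ (v ++ W ++ (w ++ W ++ z)).
Proof. by rewrite -!catA. Qed.

Lemma split3 (x : seq T) k1 k2 : k1 <= k2 ->
  x = take k1 x ++ drop k1 (take k2 x) ++ drop k2 x.
Proof.
move=> H; rewrite -(take_takel x H) catA cat_take_drop.
by rewrite cat_take_drop.
Qed.

Lemma prs_mem n kk : kk \in prs n -> kk.2 <= kk.1 <= n.
Proof.
case/allpairsPdep => [k2 [k1 [H2 H1 ->]]] /=.
by move: H1 H2; rewrite !mem_iota !add0n /= !ltnS => -> ->.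
Qed.

Lemma claim3_aux : Rle (sumR L (fun x => Rmult (INR (size (prs (size x)))) (pp x)))
  (Rinv (Rmult pW (Rmult pW pW))).
Proof.
have Hp := pWpos.
apply: le_inv; first by repeat apply: Rmult_lt_0_compat.
pose G3 := [seq (x, kk) | x <- L, kk <- prs (size x)].
have HG : Rle (sumR G3 (fun g => pp (mk3 g))) R1.
  apply: family_le1.
    apply: uniq_pairs uniqL _ => x; apply: uniq_pairs; [exact: iota_uniq | move=> ?; exact: iota_uniq].
  move=> [x kk] [y kk'] /allpairsPdep [x1 [kk1 [xL kI E1]]].
  move=> /allpairsPdep [y1 [kk2 [yL kI' E2]]] [z1 [z2 H]].
  case: E1 => Ex Ek; case: E2 => Ey Ek'; subst x kk y kk'.
  case: kk1 kI H => [k2 k1] kI; case: kk2 kI' => [k2' k1'] kI' H.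
  rewrite /mk3 /= !assocW3 in H.
  have ax := HLa xL; have ay := HLa yL.
  have [Ht R1] := compat_step (notin_take _ ax) (notin_take _ ay) H.
  have [Hm R2] := compat_step (notin_drop _ (notin_take _ ax)) (notin_drop _ (notin_take _ ay)) R1.
  have [Hd _] := compat_step (notin_drop _ ax) (notin_drop _ ay) R2.
  have /= /andP [Hk1 Hk2] := prs_mem kI.
  have /= /andP [Hk1' Hk2'] := prs_mem kI'.
  have Exy : x1 = y1.
    apply: Lnd => //; rewrite (split3 x1 Hk1) (split3 y1 Hk1').
    by apply: heq_cat Ht (heq_cat Hm Hd).
  subst y1.
  have Es1 := heq_size Ht; have Es2 := heq_size Hd.
  rewrite !size_takel in Es1; try exact: leq_trans Hk2; try exact: leq_trans Hk2'.
  rewrite !size_drop in Es2.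
  have -> : k1 = k1' by [].
  have -> : k2 = k2' by lia.
  by [].
rewrite -sumR_mulr.
move: HG; rewrite /G3 sumR_pairs.
rewrite (sumR_ext (g := fun x => Rmult (Rmult (INR (size (prs (size x)))) (pp x))
    (Rmult pW (Rmult pW pW)))) //.
move=> x xL; rewrite (sumR_ext (g := fun _ => Rmult (pp x) (Rmult pW (Rmult pW pW)))).
  by rewrite sumR_const; set nn := INR _; ring.
move=> [k2 k1] kI; have /= /andP [Hk1 Hk2] := prs_mem kI.
have Ex : pp x = Rmult (pp (take k1 x)) (Rmult (pp (drop k1 (take k2 x))) (pp (drop k2 x))).
  by rewrite -!(p_cat HP) -split3.
rewrite Ex /pW /mk3 /W /= !(p_cat HP); ring.
Qed.

Lemma claim3 : Rle (sumR L (fun x => Rmult (Rmult (INR (size x)) (INR (size x))) (pp x)))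
  (Rmult (INR 2) (Rinv (Rmult pW (Rmult pW pW)))).
Proof.
have H := claim3_aux.
have H2 : Rle (sumR L (fun x => Rmult (Rmult (INR (size x)) (INR (size x))) (pp x)))
   (Rmult (sumR L (fun x => Rmult (INR (size (prs (size x)))) (pp x))) (INR 2)).
  rewrite -sumR_mulr; apply: sumR_le => x _.
  have Hpx : Rle R0 (pp x) by apply: Rlt_le; exact: p_pos HP x.
  have Hc : Rle (INR (size x * size x)) (INR (2 * size (prs (size x)))).
    by apply: le_INR; apply/leP; exact: pairs_count.
  rewrite !mult_INR in Hc.
  set u := INR (size x) in Hc *; set v := INR (size _) in Hc *.
  set t := INR 2 in Hc *.
  nra.
have Hp : Rle R0 (INR 2) by apply: pos_INR.
set S1 := sumR _ _ in H H2; set S2 := sumR _ _ in H2 *.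
set q := Rinv _ in H *.
nra.
Qed.

End Main.

Unset Implicit Arguments. Set Strict Implicit.

Theorem lemma5 (T : finType) (I : rel T)
  (HIsym : symmetric I) (HIirr : irreflexive I) (HT : 1 < #|T|)
  (Hconn : forall x y : T, connect [rel u v | ~~ I u v] x y)
  (P : (Bnd I -> Prop) -> R) (HP : bernoulli I P) (a : T) :
  heap_sum_finite I (fun w => count_mem a w = 0) (fun w => P (upset I w)) /\
  heap_sum_finite I (fun w => count_mem a w = 0)
    (fun w => Rmult (INR (size w)) (P (upset I w))) /\
  heap_sum_finite I (fun w => count_mem a w = 0)
    (fun w => Rmult (Rmult (INR (size w)) (INR (size w))) (P (upset I w))).
Proof.
have [W0 [aW0 HW0]] := W0_exists HIsym a Hconn.
have HLa : forall L : seq (seq T), (forall w, List.In w L -> count_mem a w = 0) ->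
    forall w, w \in L -> a \notin w.
  move=> L H w wL; apply: notin_count; apply: H; exact: In_mem.
split; last split.
- exists (Rinv (pW P a W0)) => L HL Hc.
  exact: (claim1 HIsym HIirr HP aW0 HW0 HL (HLa L Hc)).
- exists (Rinv (Rmult (pW P a W0) (pW P a W0))) => L HL Hc.
  apply: Rle_trans (claim2 HIsym HIirr HP aW0 HW0 HL (HLa L Hc)).
  apply: sumR_le => x _.
  have := p_pos HP x; rewrite /p => Hpx.
  apply: Rmult_le_compat_r; first lra.
  rewrite S_INR; lra.
- exists (Rmult (INR 2) (Rinv (Rmult (pW P a W0) (Rmult (pW P a W0) (pW P a W0))))).
  move=> L HL Hc.
  exact: (claim3 HIsym HIirr HP aW0 HW0 HL (HLa L Hc)).
Qed.
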